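(* Let $\tilde E=E_\Delta\uplus F$ be the topological union of two disjoint Radon spaces $E_\Delta$ and $F$, and let $X$ be a right process on $\tilde E$ such that $F$ is an absorbing set for $X$. Define $\psi:\tilde E\to E_\Delta$ by $\psi(x)=x$ for $x\in E_\Delta$ and $\psi(x)=\Delta$ for $x\in F$. Then $\psi(X)$ is a right process on $E_\Delta$.
   Context: Right processes are in the sense of Sharpe (General Theory of Markov Processes); $E_\Delta=E\cup\{\Delta\}$ is a state space with adjoined cemetery point $\Delta$. A set $F$ is absorbing for $X$ if $\mathbb P_x(X_t\in F\text{ for all }t\ge0)=1$ for all $x\in F$. *)

(* Defs.v *)
From HB Require Import structures.
From mathcomp Require Import all_boot all_order all_algebra.
From mathcomp Require Import all_classical all_reals all_analysis.
From mathcomp Require Import measurable_realfun.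
Set Implicit Arguments. Unset Strict Implicit. Unset Printing Implicit Defensive.
Import Order.TTheory GRing.Theory Num.Theory.
Local Open Scope classical_set_scope.
Local Open Scope ring_scope.

Definition borel_sets (T : topologicalType) : set (set T) := <<s open >>.

Definition borel_probability (R : realType) (T : topologicalType)
    (mu : set T -> \bar R) : Prop :=
  [/\ mu set0 = 0%E, mu setT = 1%E,
      (forall A, borel_sets A -> (0 <= mu A)%E) &
      (forall U : nat -> set T, (forall n, borel_sets (U n)) -> trivIset setT U ->
         (fun n => \sum_(0 <= k < n) mu (U k))%E @ \oo --> mu (\bigcup_n U n))].

(* A is universally measurable: it is measurable for the completion of  *)
(* every Borel probability measure on T.                                 *)
Definition universally_measurable (R : realType) (T : topologicalType)
    (A : set T) : Prop :=
  forall mu : set T -> \bar R, borel_probability mu ->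
    exists B1 B2 : set T, [/\ borel_sets B1, borel_sets B2, B1 `<=` A, A `<=` B2 &
                              mu (B2 `\` B1) = 0%E].

Definition umeas_fun (R : realType) (T : topologicalType) (f : T -> R) : Prop :=
  forall B : set R, measurable B -> universally_measurable R (f @^-1` B).

Definition umeas_efun (R : realType) (T : topologicalType) (f : T -> \bar R) : Prop :=
  forall B : set (\bar R), measurable B -> universally_measurable R (f @^-1` B).

(* Radon space: homeomorphic to a universally measurable subset of a     *)
(* compact metric space.                                                 *)
Definition radon_space (R : realType) (T : topologicalType) : Prop :=
  exists (K : pseudoMetricType R) (h : T -> K),
    [/\ compact [set: K], hausdorff_space K, injective h,
        (forall U : set T, open U <-> exists V : set K, open V /\ U = h @^-1` V) &
        universally_measurable R (range h)].

Definition tsumfam (E F : topologicalType) (b : bool) : topologicalType :=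
  if b then E else F.

Definition tunion (E F : topologicalType) : topologicalType :=
  {b : bool & tsumfam E F b}.

Definition inl_t (E F : topologicalType) (x : E) : tunion E F :=
  existT (tsumfam E F) true x.

Definition inr_t (E F : topologicalType) (y : F) : tunion E F :=
  existT (tsumfam E F) false y.

Definition Fpart (E F : topologicalType) : set (tunion E F) :=
  [set z | projT1 z = false].

Definition tpsi (E F : topologicalType) (D : E) (z : tunion E F) : E :=
  match z with
  | existT b x => (if b return tsumfam E F b -> E then fun x => x else fun _ => D) x
  end.

(* Right processes (Sharpe, General Theory of Markov Processes)        *)

Section process.
Context (R : realType) (S : topologicalType) (d : measure_display)
  (Om : measurableType d).

Definition semigroup (X : R -> Om -> S) (P : S -> probability Om R)
    (t : R) (f : S -> \bar R) (y : S) : \bar R :=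
  (\int[P y]_w f (X t w))%E.

Definition absorbing (X : R -> Om -> S) (P : S -> probability Om R)
    (A : set S) : Prop :=
  forall x, A x -> {ae P x, forall w, forall t, 0 <= t -> A (X t w)}.

Definition excessive (X : R -> Om -> S) (P : S -> probability Om R)
    (alpha : R) (f : S -> \bar R) : Prop :=
  [/\ (forall y, (0 <= f y)%E), umeas_efun f,
      (forall t y, 0 <= t -> ((expR (- (alpha * t)))%:E * semigroup X P t f y <= f y)%E) &
      (forall y, ((expR (- (alpha * t)))%:E * semigroup X P t f y)%E @[t --> 0^'+]
                 --> f y)].

Definition bounded_fun (f : S -> R) : Prop := exists M : R, forall y, `|f y| <= M.

Definition right_process (D : S) (G : R -> set (set Om)) (X : R -> Om -> S)
    (th : R -> Om -> Om) (P : S -> probability Om R) : Prop :=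
  radon_space R S /\
      (forall t, 0 <= t -> sigma_algebra setT (G t) /\ G t `<=` measurable)
      /\ (forall s t, 0 <= s -> s <= t -> G s `<=` G t) /\
      (forall t, 0 <= t -> forall A, universally_measurable R A -> G t (X t @^-1` A)) /\
      (forall w t, 0 <= t -> X s w @[s --> t^'+] --> X t w) /\
      (forall t s w, 0 <= t -> 0 <= s -> X s (th t w) = X (s + t) w) /\
      (forall H, measurable H -> umeas_fun (fun x => fine (P x H))) /\
      (forall x, {ae P x, forall w, X 0 w = x}) /\
      absorbing X P [set D] /\
      (forall x s t (f : S -> R), 0 <= s -> 0 <= t -> umeas_fun f -> bounded_fun f ->
         forall H, G t H ->
         (\int[P x]_(w in H) (f (X (t + s) w))%:E =
          \int[P x]_(w in H) semigroup X P s (fun y => (f y)%:E) (X t w))%E) /\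
      (forall alpha f, 0 < alpha -> excessive X P alpha f ->
         forall x, {ae P x, forall w, forall t, 0 <= t ->
                      f (X s w) @[s --> t^'+] --> f (X t w)}).

End process.

(* Main.v *)
Require Import Defs.
From HB Require Import structures.
From mathcomp Require Import all_boot all_order all_algebra.
From mathcomp Require Import all_classical all_reals all_analysis.
From mathcomp Require Import measurable_realfun.
From mathcomp Require unstable.
Local Open Scope classical_set_scope.
Local Open Scope ring_scope.

Lemma borel_preimage (T U : topologicalType) (h : T -> U) :
  continuous h -> forall B, borel_sets B -> borel_sets (h @^-1` B).
Proof.
move=> ch B HB.
suff : image_set_system setT h (borel_sets (T:=T)) B by rewrite /image_set_system /= setTI.
apply: (smallest_sub _ _ HB).
  exact/sigma_algebra_image/smallest_sigma_algebra.
move=> V oV; rewrite /image_set_system /= setTI; apply: sub_sigma_algebra.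
by apply: open_comp => // x _; apply: ch.
Qed.

Lemma umeas_preimage (R : realType) (T U : topologicalType) (h : T -> U) :
  continuous h -> forall A, universally_measurable R A ->
  universally_measurable R (h @^-1` A).
Proof.
move=> ch A HA mu [m0 m1 mge mU].
have bp : borel_probability (fun B => mu (h @^-1` B)).
  split.
  - by rewrite preimage_set0.
  - by rewrite preimage_setT.
  - by move=> B bB; apply: mge; apply: borel_preimage.
  - move=> V bV tV; rewrite preimage_bigcup; apply: mU.
      by move=> n; apply: borel_preimage.
    move=> i j _ _ [x [Hi Hj]]; apply: tV => //; by exists (h x).
have [B1 [B2 [bB1 bB2 sB1 sB2 mB]]] := HA _ bp.
exists (h @^-1` B1), (h @^-1` B2); split.
+ exact: borel_preimage.
+ exact: borel_preimage.
+ by move=> x /sB1.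
+ by move=> x /sB2.
+ exact: mB.
Qed.

Arguments umeas_preimage {R T U h} _ {A}.

Lemma tpsi_cont (E F : topologicalType) (D : E) : continuous (@tpsi E F D).
Proof.
have -> : @tpsi E F D =
  unstable.sigT_fun (fun b => if b return tsumfam E F b -> E then (fun x => x) else fun _ => D).
  by apply: funext => -[[] x].
apply: sigT_continuous => -[] /=.
- by move=> x; exact: cvg_id.
- exact: cst_continuous.
Qed.

Lemma inl_cont (E F : topologicalType) : continuous (@inl_t E F).
Proof. move=> x; exact: (@existT_continuous _ (tsumfam E F) true x). Qed.

Lemma ae_const_int (R : realType) d (Om : measurableType d) (mu : probability Om R)
  (g : Om -> \bar R) c :
  measurable_fun setT g -> {ae mu, forall w, g w = c} -> (\int[mu]_w g w = c)%E.
Proof.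
move=> mg ae.
rewrite (@ae_eq_integral _ _ _ mu setT (cst c)) //.
- rewrite integral_cst // -[RHS]mule1; congr (_ * _)%E; exact: probability_setT.
rewrite /ae_eq; apply: filterS ae => w -> _; done.
Qed.

Theorem theoremA1 (R : realType) (E F : topologicalType) (D : E)
  (d : measure_display) (Om : measurableType d) (G : R -> set (set Om))
  (X : R -> Om -> tunion E F) (th : R -> Om -> Om)
  (P : tunion E F -> probability Om R) :
  radon_space R E -> radon_space R F ->
  right_process (@inl_t E F D) G X th P ->
  absorbing X P (@Fpart E F) ->
  right_process D G (fun t w => tpsi D (X t w)) th (fun x => P (@inl_t E F x)).
Proof.
move=> rE rF HX absF.
case: HX => radT [filt [mono [adapt [rc [shift [umP [norm [absD [markov hd2]]]]]]]]].
have meas : forall s (g : E -> \bar R), 0 <= s -> umeas_efun g ->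
    measurable_fun setT (fun w => g (tpsi D (X s w))).
  move=> s g s0 hg _ B mB; rewrite setTI; apply: (filt s s0).2.
  apply: (adapt s s0 (tpsi D @^-1` (g @^-1` B))).
  exact: (umeas_preimage (@tpsi_cont E F D) (hg B mB)).
have key : forall s (g : E -> \bar R) z, 0 <= s -> umeas_efun g ->
  semigroup X P s (fun y => g (tpsi D y)) z =
  semigroup (fun t w => tpsi D (X t w)) (fun x => P (@inl_t E F x)) s g (tpsi D z).
  move=> s g [[] e] s0 hg; first by [].
  have mg := meas s g s0 hg.
  rewrite /semigroup /= (@ae_const_int _ _ _ _ _ (g D) mg); last first.
    have := absF (existT _ false e) erefl; apply: filterS => w /(_ s s0).
    by case: (X s w) => -[] v; rewrite /Fpart.
  rewrite (@ae_const_int _ _ _ _ _ (g D) mg) //.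
  have := absD (@inl_t E F D) erefl; apply: filterS => w /(_ s s0).
  by rewrite /set1 /= => ->.
have umE : forall f : E -> R, umeas_fun f -> umeas_efun (fun y => (f y)%:E).
  move=> f uf B mB.
  have h := EFin_measurable measurableT mB; rewrite setTI in h.
  exact: (uf _ h).
split; first exact: rE.
split; first exact: filt.
split; first exact: mono.
split.
  move=> t t0 A hA; exact: (adapt t t0 _ (umeas_preimage (@tpsi_cont E F D) hA)).
split.
  move=> w t t0; apply: (continuous_cvg _ (@tpsi_cont E F D _)); exact: rc.
split.
  by move=> t s w t0 s0; rewrite shift.
split.
  move=> H mH B mB; exact: (umeas_preimage (@inl_cont E F) (umP H mH B mB)).
split.
  by move=> x; apply: filterS (norm (inl_t F x)) => w ->.
split.
  move=> x /= ->; apply: filterS (absD (@inl_t E F D) erefl) => w Hw t t0.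
  by rewrite /set1 /= (Hw t t0).
split.
  move=> x s t f s0 t0 uf bf H GH.
  have uf' : @umeas_fun R (tunion E F) (fun y => f (tpsi D y)).
    move=> B mB; have hh := (umeas_preimage (@tpsi_cont E F D) (uf B mB)); exact hh.
  have bf' : @Defs.bounded_fun R (tunion E F) (fun y => f (tpsi D y)).
    by case: bf => M hM; exists M.
  rewrite (markov (inl_t F x) s t _ s0 t0 uf' bf' H GH).
  apply: eq_integral => w _.
  exact: (key s (fun y => (f y)%:E) (X t w) s0 (umE f uf)).
move=> alpha f a0 [f0 uf ineq lim] x.
have uf' : @umeas_efun R (tunion E F) (fun y => f (tpsi D y)).
  move=> B mB; have hh := (umeas_preimage (@tpsi_cont E F D) (uf B mB)); exact hh.
have ex : excessive X P alpha (fun y => f (tpsi D y)).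
  split => //.
  - by move=> t y t0; rewrite key //; exact: ineq.
  - move=> y; apply: cvg_trans (lim (tpsi D y)); apply: near_eq_cvg.
    near=> t; rewrite key //.
exact: (hd2 alpha _ a0 ex (inl_t F x)).
Unshelve. all: by end_near.
Qed.
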